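(* Consider a run of Algorithm 3 (described in the context) under the Standing Assumption and Matrix Assumption of the context, and let $g_{\max}>0$. If the stochastic gradient estimates satisfy $\|\bar g_k-g_k\|_2\le g_{\max}$ for all $k\in\mathbb{N}$, then the sequence $\{\bar u_k\}$ is bounded, and there exist $\bar k_\tau\in\mathbb{N}$ and $\bar\tau_{\min}>0$ such that $\bar\tau_k=\bar\tau_{\min}$ for all $k\ge\bar k_\tau$.
   Context: Problem: $\min_x f(x)$ s.t. $c(x)=0$, $f(x)=\mathbb{E}[F(x,\omega)]$, $c:\mathbb{R}^n\to\mathbb{R}^m$ deterministic. Notation: $g_k=\nabla f(x_k)$, $c_k=c(x_k)$, $J_k=\nabla c(x_k)^T$; $\Delta q(x,\tau,g,H,d)=-\tau(g^Td+\frac12\max\{d^THd,0\})+\|c(x)\|_1$. Standing Assumption: there is an open convex set $\mathcal X$ containing all iterates; $f$ is $C^1$ and bounded below on $\mathcal X$ with $\nabla f$ bounded and $L$-Lipschitz on $\mathcal X$; $c$ and $\nabla c^T$ bounded on $\mathcal X$; each $\nabla c_i$ is $\gamma_i$-Lipschitz on $\mathcal X$; singular values of $\nabla c(x)^T$ bounded away from zero uniformly over $\mathcal X$. $\Gamma:=\sum_i\gamma_i$. Matrix Assumption: deterministic symmetric $H_k$ with $\|H_k\|_2\le\kappa_H$ and $u^TH_ku\ge\zeta\|u\|_2^2$ whenever $J_ku=0$. Algorithm 3 (inputs $x_0$, $\bar\tau_{-1}>0$, $\epsilon,\sigma\in(0,1)$, $\bar\xi_{-1}>0$, $\{\beta_k\}\subset(0,1]$,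 $\theta\ge0$): at iteration $k$, obtain stochastic gradient $\bar g_k$; $(\bar d_k,\bar y_k)$ solves $H_k\bar d_k+J_k^T\bar y_k=-\bar g_k$, $J_k\bar d_k=-c_k$ (assumed $\bar d_k\neq0$). $\bar\tau_k^{trial}=\infty$ if $\bar g_k^T\bar d_k+\max\{\bar d_k^TH_k\bar d_k,0\}\le0$, else $\frac{(1-\sigma)\|c_k\|_1}{\bar g_k^T\bar d_k+\max\{\bar d_k^TH_k\bar d_k,0\}}$; $\bar\tau_k=\bar\tau_{k-1}$ if $\bar\tau_{k-1}\le\bar\tau_k^{trial}$, else $(1-\epsilon)\bar\tau_k^{trial}$. $\bar\xi_k^{trial}=\frac{\Delta q(x_k,\bar\tau_k,\bar g_k,H_k,\bar d_k)}{\bar\tau_k\|\bar d_k\|_2^2}$; $\bar\xi_k=\bar\xi_{k-1}$ if $\bar\xi_{k-1}\le\bar\xi_k^{trial}$, else $(1-\epsilon)\bar\xi_k^{trial}$. With $D_k=(\bar\tau_kL+\Gamma)\|\bar d_k\|_2^2$, $\hat a_k=\beta_k\Delta q(x_k,\bar\tau_k,\bar g_k,H_k,\bar d_k)/D_k$, $\tilde a_k=\hat a_k-4\|c_k\|_1/D_k$, project both onto $[a_k,a_k+\theta\beta_k^2]$ with $a_k=\frac{\beta_k\bar\xi_k\bar\tau_k}{\bar\tau_kL+\Gamma}$ to get $\widehat\alpha_k,\widetilde\alpha_k$; $\bar\alpha_k=\widehat\alpha_k$ if $\widehat\alpha_k<1$, $1$ if $\widetilde\alpha_k\le1\le\widehat\alpha_k$,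 $\widetilde\alpha_k$ if $\widetilde\alpha_k>1$; $x_{k+1}=x_k+\bar\alpha_k\bar d_k$. Decomposition: $\bar d_k=\bar u_k+v_k$ with $\bar u_k\in\mathrm{Null}(J_k)$, $v_k\in\mathrm{Range}(J_k^T)$. *)

(* Defs.v *)
From HB Require Import structures.
From mathcomp Require Import all_boot all_order all_algebra.
From mathcomp Require Import all_classical all_reals all_analysis.
Set Implicit Arguments. Unset Strict Implicit. Unset Printing Implicit Defensive.
Import Order.TTheory GRing.Theory Num.Theory.
Import numFieldNormedType.Exports.
Local Open Scope ring_scope.

Section Defs.
Variable R : realType.

Definition dotv (n : nat) (u v : 'cV[R]_n) : R := \sum_(i < n) u i 0 * v i 0.
Definition norm2 (n : nat) (v : 'cV[R]_n) : R := Num.sqrt (dotv v v).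
Definition norm1 (n : nat) (v : 'cV[R]_n) : R := \sum_(i < n) `|v i 0|.

(* all singular values of J (m x n) are >= s, i.e. sigma_min(J) >= s,
   via the variational characterisation  ||J^T y||_2 >= s ||y||_2. *)
Definition sing_vals_ge (m n : nat) (J : 'M[R]_(m, n)) (s : R) : Prop :=
  forall y : 'cV[R]_m, s * norm2 y <= norm2 (J^T *m y).

Definition opnorm2_le (n : nat) (H : 'M[R]_n) (k : R) : Prop :=
  forall v : 'cV[R]_n, norm2 (H *m v) <= k * norm2 v.

Definition dq (n m : nat) (tau : R) (g : 'cV[R]_n) (H : 'M[R]_n)
  (d : 'cV[R]_n) (cx : 'cV[R]_m) : R :=
  - tau * (dotv g d + 2^-1 * Num.max (dotv d (H *m d)) 0) + norm1 cx.

(* value at index k of a sequence whose "index -1" value is init *)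
Definition prevv (init : R) (s : nat -> R) (k : nat) : R :=
  match k with 0%N => init | k'.+1 => s k' end.

(* merit parameter update; tau_trial = +oo when den <= 0 *)
Definition tau_update (eps sigma tau_prev : R) (n m : nat) (g : 'cV[R]_n)
  (H : 'M[R]_n) (d : 'cV[R]_n) (cx : 'cV[R]_m) : R :=
  let den := dotv g d + Num.max (dotv d (H *m d)) 0 in
  if den <= 0 then tau_prev
  else let trial := (1 - sigma) * norm1 cx / den in
       if tau_prev <= trial then tau_prev else (1 - eps) * trial.

Definition xi_update (eps xi_prev trial : R) : R :=
  if xi_prev <= trial then xi_prev else (1 - eps) * trial.

Definition proj_int (lo hi z : R) : R := Num.min hi (Num.max lo z).

Definition alpha_sel (n m : nat) (L Gam theta beta tau xi : R) (g : 'cV[R]_n)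
  (H : 'M[R]_n) (d : 'cV[R]_n) (cx : 'cV[R]_m) : R :=
  let D := (tau * L + Gam) * norm2 d ^+ 2 in
  let ahat := beta * dq tau g H d cx / D in
  let atil := ahat - 4 * norm1 cx / D in
  let a := beta * xi * tau / (tau * L + Gam) in
  let alhat := proj_int a (a + theta * beta ^+ 2) ahat in
  let altil := proj_int a (a + theta * beta ^+ 2) atil in
  if alhat < 1 then alhat else if altil <= 1 then 1 else altil.

End Defs.

(* Main.v *)
Require Import Defs.
From HB Require Import structures.
From mathcomp Require Import all_boot all_order all_algebra.
From mathcomp Require Import all_classical all_reals all_analysis.
From mathcomp Require Import ring lra.
Import Order.TTheory GRing.Theory Num.Theory.
Import numFieldNormedType.Exports.
Local Open Scope ring_scope.
Set Implicit Arguments. Unset Strict Implicit. Unset Printing Implicit Defensive.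

Section Vec.
Variable R : realType.

Lemma entry_le n (v : 'cV[R]_n) i : `|v i 0| <= `|v|.
Proof.
have -> : `|v| = mx_norm v by [].
rewrite mx_normrE.
exact: (le_bigmax _ _ (i, 0)).
Qed.

Lemma dotvC n (u v : 'cV[R]_n) : dotv u v = dotv v u.
Proof. by apply: eq_bigr => i _; rewrite mulrC. Qed.

Lemma dotvDl n (u w v : 'cV[R]_n) : dotv (u + w) v = dotv u v + dotv w v.
Proof. by rewrite /dotv -big_split; apply: eq_bigr => i _; rewrite !mxE mulrDl. Qed.

Lemma dotvNl n (u v : 'cV[R]_n) : dotv (- u) v = - dotv u v.
Proof. by rewrite /dotv -sumrN; apply: eq_bigr => i _; rewrite !mxE mulNr. Qed.

Lemma dotvZl n a (u v : 'cV[R]_n) : dotv (a *: u) v = a * dotv u v.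
Proof. by rewrite /dotv mulr_sumr; apply: eq_bigr => i _; rewrite !mxE mulrA. Qed.

Lemma dotvZr n a (u v : 'cV[R]_n) : dotv v (a *: u) = a * dotv v u.
Proof. by rewrite dotvC dotvZl dotvC. Qed.

Lemma dotvDr n (u w v : 'cV[R]_n) : dotv v (u + w) = dotv v u + dotv v w.
Proof. by rewrite dotvC dotvDl !(dotvC v). Qed.

Lemma dotvNr n (u v : 'cV[R]_n) : dotv v (- u) = - dotv v u.
Proof. by rewrite dotvC dotvNl dotvC. Qed.

Lemma dotvBr n (u w v : 'cV[R]_n) : dotv v (u - w) = dotv v u - dotv v w.
Proof. by rewrite dotvDr dotvNr. Qed.

Lemma dotv0l n (v : 'cV[R]_n) : dotv 0 v = 0.
Proof. by rewrite /dotv big1 // => i _; rewrite mxE mul0r. Qed.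

Lemma dotv_mul p q (A : 'M[R]_(p, q)) (u : 'cV[R]_p) (v : 'cV[R]_q) :
  dotv u (A *m v) = dotv (A^T *m u) v.
Proof.
rewrite /dotv.
under eq_bigr => i _ do rewrite mxE mulr_sumr.
rewrite exchange_big /=; apply: eq_bigr => j _.
rewrite mxE mulr_suml; apply: eq_bigr => i _; rewrite !mxE.
by rewrite mulrA [u i 0 * _]mulrC.
Qed.

Lemma dotv_ge0 n (u : 'cV[R]_n) : 0 <= dotv u u.
Proof. by apply: sumr_ge0 => i _; rewrite -expr2 sqr_ge0. Qed.

Lemma norm2_ge0 n (u : 'cV[R]_n) : 0 <= norm2 u.
Proof. exact: sqrtr_ge0. Qed.

Lemma norm2_sq n (u : 'cV[R]_n) : norm2 u ^+ 2 = dotv u u.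
Proof. by rewrite /norm2 sqr_sqrtr // dotv_ge0. Qed.

Lemma CS_sq n (u v : 'cV[R]_n) : dotv u v ^+ 2 <= dotv u u * dotv v v.
Proof.
set A := dotv u u; set B := dotv u v; set C := dotv v v.
have h1 := dotv_ge0 (C *: u - B *: v).
have h2 := dotv_ge0 (B *: u - A *: v).
rewrite !(dotvDl, dotvDr, dotvNl, dotvNr, dotvZl, dotvZr) -/A -/B -/C (dotvC v u) -/B in h1 h2.
have h3 := dotv_ge0 (u + v).
have h4 := dotv_ge0 (u - v).
rewrite !(dotvDl, dotvDr, dotvNl, dotvNr) -/A -/B -/C (dotvC v u) -/B in h3 h4.
have hA := dotv_ge0 u; have hC := dotv_ge0 v; rewrite -/A in hA; rewrite -/C in hC.
have [Ap|A0] := ltrP 0 A.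
  nra.
have [Cp|C0] := ltrP 0 C.
  nra.
nra.
Qed.

Lemma CS n (u v : 'cV[R]_n) : `|dotv u v| <= norm2 u * norm2 v.
Proof.
rewrite /norm2 -sqrtrM ?dotv_ge0 // -sqrtr_sqr ler_sqrt ?CS_sq //.
by rewrite mulr_ge0 ?dotv_ge0.
Qed.

Lemma CS' n (u v : 'cV[R]_n) : dotv u v <= norm2 u * norm2 v.
Proof. exact: le_trans (ler_norm _) (CS u v). Qed.

Lemma norm2N n (u : 'cV[R]_n) : norm2 (- u) = norm2 u.
Proof. by rewrite /norm2 dotvNl dotvNr opprK. Qed.

Lemma norm2D n (u v : 'cV[R]_n) : norm2 (u + v) <= norm2 u + norm2 v.
Proof.
have hu := norm2_ge0 u; have hv := norm2_ge0 v.
rewrite {1}/norm2 -(ger0_norm (addr_ge0 hu hv)) -sqrtr_sqr ler_sqrt ?sqr_ge0 //.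
rewrite !(dotvDl, dotvDr) (dotvC v u).
have := CS' u v; have := norm2_sq u; have := norm2_sq v.
nra.
Qed.

Lemma norm1_ge0 n (u : 'cV[R]_n) : 0 <= norm1 u.
Proof. by apply: sumr_ge0 => i _. Qed.

Lemma norm2_le_norm1 n (u : 'cV[R]_n) : norm2 u <= norm1 u.
Proof.
rewrite /norm2 -(ger0_norm (norm1_ge0 u)) -sqrtr_sqr ler_sqrt ?sqr_ge0 //.
rewrite expr2 /dotv {2}/norm1 mulr_sumr; apply: ler_sum => i _.
apply: le_trans (ler_norm _) _; rewrite normrM.
apply: ler_wpM2r => //.
rewrite /norm1 (bigD1 i) //= lerDl.
by apply: sumr_ge0.
Qed.

Lemma norm1_le n (u : 'cV[R]_n) B : `|u| <= B -> norm1 u <= n%:R * B.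
Proof.
move=> hB; rewrite /norm1.
apply: le_trans (_ : \sum_(i < n) B <= _).
  by apply: ler_sum => i _; apply: le_trans (entry_le u i) hB.
by rewrite sumr_const card_ord mulr_natl.
Qed.

End Vec.

Section Tau.
Variable R : realType.

Lemma geom_bound (e : R) j : 0 < e < 1 -> (1 - e) ^+ j * (1 + j%:R * e) <= 1.
Proof.
move=> /andP[e0 e1]; elim: j => [|j IH]; first by rewrite expr0 mul0r addr0 mulr1.
rewrite exprS -natr1.
set q := (1 - e) ^+ j in IH *.
have hq : 0 <= q by apply: exprn_ge0; lra.
have hj : 0 <= j%:R :> R by [].
have h : 0 <= q * ((j%:R + 1) * (e * e)) by apply: mulr_ge0 => //; nra.
nra.
Qed.

Lemma tau_eventually (tau den cn : nat -> R) (tau_init eps sigma Cd : R) :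
  0 < tau_init -> 0 < eps < 1 -> 0 < sigma < 1 -> 0 < Cd ->
  (forall k, 0 <= cn k) -> (forall k, den k <= Cd * cn k) ->
  (forall k, tau k = if den k <= 0 then prevv tau_init tau k
     else if prevv tau_init tau k <= (1 - sigma) * cn k / den k
          then prevv tau_init tau k
          else (1 - eps) * ((1 - sigma) * cn k / den k)) ->
  exists (ktau : nat) (tau_min : R), 0 < tau_min /\
     forall k, (ktau <= k)%N -> tau k = tau_min.
Proof.
move=> t0 /andP[e0 e1] /andP[s0 s1] Cd0 cn0 hden htau.
set p := prevv tau_init tau.
have pS k : p k.+1 = tau k by [].
set T0 := (1 - sigma) / Cd.
have T0p : 0 < T0 by apply: divr_gt0 => //; lra.
have trialge k : 0 < den k -> T0 <= (1 - sigma) * cn k / den k.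
  move=> dk; rewrite /T0 ler_pdivrMr // mulrAC ler_pdivlMr //.
  have := hden k; nra.
have step k : tau k = p k \/ (tau k <= (1 - eps) * p k /\ (1 - eps) * T0 <= tau k).
  rewrite htau -/p; case: ifP => hd; first by left.
  case: ifP => hp; first by left.
  right.
  have dk : 0 < den k by rewrite ltNge hd.
  have := trialge k dk; move: hp; rewrite leNgt => /negbFE hp.
  by split; nra.
set lb := Num.min tau_init ((1 - eps) * T0).
have lbp : 0 < lb by rewrite lt_min t0 /=; apply: mulr_gt0 => //; lra.
have plb k : lb <= p k.
  elim: k => [|k IH]; first by rewrite /= ge_min lexx.
  rewrite pS; case: (step k) => [->//|[_ h]].
  by rewrite ge_min h orbT.
have pmono k : p k.+1 <= p k.
  rewrite pS; case: (step k) => [->//|[h _]].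
  have := plb k; nra.
have pmono' k d : p (k + d)%N <= p k.
  elim: d => [|d IH]; first by rewrite addn0.
  by rewrite addnS; apply: le_trans (pmono _) IH.
have [HK|HK] := pselect (exists K, forall k, (K <= k)%N -> tau k = p k).
  case: HK => K HK; exists K, (p K); split; first exact: lt_le_trans lbp (plb K).
  move=> k; elim: k => [|k IH].
    by rewrite leqn0 => /eqP <-; apply: HK.
  rewrite leq_eqVlt => /orP[/eqP <-|hk]; first by apply: HK.
  by rewrite HK ?(ltnW hk) //; exact: (IH hk).
exfalso.
have H2 K : exists k, (K <= k)%N /\ tau k <> p k.
  apply: contrapT => Hn; apply: HK; exists K => k Hk; apply: contrapT => Hne.
  by apply: Hn; exists k.
have H3 j : exists k, p k <= tau_init * (1 - eps) ^+ j.
  elim: j => [|j [k0 IH]]; first by exists 0%N; rewrite expr0 mulr1.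
  have [k [hk hne]] := H2 k0.
  exists k.+1; rewrite pS.
  case: (step k) => [//|[h _]].
  have := pmono' k0 (k - k0)%N; rewrite subnKC //.
  have := plb k; rewrite exprS.
  have hq : 0 <= (1 - eps) ^+ j by apply: exprn_ge0; lra.
  nra.
have hx : 0 <= tau_init / (lb * eps) by apply: divr_ge0; [lra| apply: mulr_ge0; lra].
set j := Num.Def.archi_bound (tau_init / (lb * eps)).
have hj := archi_boundP hx; rewrite -/j in hj.
have [k hk] := H3 j.
have := plb k.
have eb : 0 < eps < 1 by rewrite e0 e1.
have := geom_bound j eb.
rewrite ltr_pdivrMr in hj; last exact: mulr_gt0.
set q := (1 - eps) ^+ j in hk *.
have hq : 0 <= q by apply: exprn_ge0; lra.
have hjn : 0 <= j%:R :> R by [].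
move=> h1 h2.
have h3 : lb * (1 + j%:R * eps) <= tau_init * q * (1 + j%:R * eps).
  apply: ler_wpM2r; first nra. lra.
nra.
Qed.
End Tau.

Local Open Scope classical_set_scope.

Theorem proposition3p17
  (R : realType) (n m : nat)
  (* problem data *)
  (X : set 'cV[R]_n) (f : 'cV[R]_n -> R) (gf : 'cV[R]_n -> 'cV[R]_n)
  (c : 'cV[R]_n -> 'cV[R]_m) (J : 'cV[R]_n -> 'M[R]_(m, n))
  (L : R) (gam : 'I_m -> R)
  (* Matrix Assumption data *)
  (H : nat -> 'M[R]_n) (kappaH zeta : R)
  (* algorithm inputs *)
  (x0 : 'cV[R]_n) (tau_init eps sigma xi_init : R) (beta : nat -> R) (theta : R)
  (* algorithm sequences *)
  (x : nat -> 'cV[R]_n) (gbar : nat -> 'cV[R]_n) (d : nat -> 'cV[R]_n)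
  (y : nat -> 'cV[R]_m) (tau xi alpha : nat -> R)
  (ubar v : nat -> 'cV[R]_n)
  (gmax : R) :
  (* Standing Assumption *)
  open X -> convex_set X ->
  (forall k, X (x k)) ->
  (forall z, X z -> differentiable f z /\
     forall h, 'd f z h = dotv (gf z) h) ->
  {within X, continuous gf} ->
  (exists lb, forall z, X z -> lb <= f z) ->
  (exists B, forall z, X z -> `|gf z| <= B) ->
  0 < L ->
  (forall z w, X z -> X w -> norm2 (gf z - gf w) <= L * norm2 (z - w)) ->
  (exists B, forall z, X z -> `|c z| <= B) ->
  (exists B, forall z, X z -> `|J z| <= B) ->
  (forall i : 'I_m, forall z, X z -> differentiable (fun w => c w i 0) z /\
     forall h, 'd (fun w => c w i 0) z h = dotv (row i (J z))^T h) ->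
  (forall i, 0 <= gam i) ->
  (forall i z w, X z -> X w ->
     norm2 ((row i (J z))^T - (row i (J w))^T) <= gam i * norm2 (z - w)) ->
  (exists s, 0 < s /\ forall z, X z -> sing_vals_ge (J z) s) ->
  (* Matrix Assumption *)
  0 < zeta ->
  (forall k, (H k)^T = H k) ->
  (forall k, opnorm2_le (H k) kappaH) ->
  (forall k u, J (x k) *m u = 0 -> zeta * norm2 u ^+ 2 <= dotv u (H k *m u)) ->
  (* algorithm inputs *)
  0 < tau_init -> 0 < eps < 1 -> 0 < sigma < 1 -> 0 < xi_init ->
  (forall k, 0 < beta k <= 1) -> 0 <= theta ->
  (* Algorithm 3 *)
  x 0%N = x0 ->
  (forall k, H k *m d k + (J (x k))^T *m y k = - gbar k) ->
  (forall k, J (x k) *m d k = - c (x k)) ->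
  (forall k, d k != 0) ->
  (forall k, tau k = tau_update eps sigma (prevv tau_init tau k)
                       (gbar k) (H k) (d k) (c (x k))) ->
  (forall k, xi k = xi_update eps (prevv xi_init xi k)
       (dq (tau k) (gbar k) (H k) (d k) (c (x k)) / (tau k * norm2 (d k) ^+ 2))) ->
  (forall k, alpha k = alpha_sel L (\sum_i gam i) theta (beta k) (tau k) (xi k)
                         (gbar k) (H k) (d k) (c (x k))) ->
  (forall k, x k.+1 = x k + alpha k *: d k) ->
  (* decomposition *)
  (forall k, d k = ubar k + v k) ->
  (forall k, J (x k) *m ubar k = 0) ->
  (forall k, exists w, v k = (J (x k))^T *m w) ->
  (* stochastic gradient error bound *)
  0 < gmax ->
  (forall k, norm2 (gbar k - gf (x k)) <= gmax) ->
  (exists B, forall k, norm2 (ubar k) <= B) /\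
  (exists (ktau : nat) (tau_min : R), 0 < tau_min /\
     forall k, (ktau <= k)%N -> tau k = tau_min).
Proof.
move=> hXo hXc hXk hdiff hcont hflb [Bg hBg] hL hLip [Bc hBc] hJb hcd hgam0 hgamL
  [s [s0 hs]] z0 hHs hHn hHz t0 he hsg xi0 hbeta hth hx0 hsys1 hsys2 hdn0 htau hxi
  halpha hxs hdec hJu hv gm0 hgb.
have Bg0 : 0 <= Bg := le_trans (normr_ge0 _) (hBg _ (hXk 0%N)).
have Bc0 : 0 <= Bc := le_trans (normr_ge0 _) (hBc _ (hXk 0%N)).
set Kp := Num.max kappaH 0.
have Kp0 : 0 <= Kp by rewrite le_max lexx orbT.
have hHK k w : norm2 (H k *m w) <= Kp * norm2 w.
  apply: le_trans (hHn k w) _; apply: ler_wpM2r; first exact: norm2_ge0.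
  by rewrite le_max lexx.
set G := gmax + n%:R * Bg.
have hG k : norm2 (gbar k) <= G.
  have -> : gbar k = (gbar k - gf (x k)) + gf (x k) by rewrite subrK.
  apply: le_trans (norm2D _ _) _; apply: lerD; first exact: hgb.
  apply: le_trans (norm2_le_norm1 _) _; apply: norm1_le; exact: hBg.
have G0 : 0 <= G := le_trans (norm2_ge0 _) (hG 0%N).
set Cc := m%:R * Bc.
have hC1 k : norm1 (c (x k)) <= Cc by apply: norm1_le; exact: hBc.
have hC2 k : norm2 (c (x k)) <= norm1 (c (x k)) := norm2_le_norm1 _.
have hJv k : J (x k) *m v k = - c (x k).
  by rewrite -(hsys2 k) (hdec k) mulmxDr (hJu k) add0r.
have hV k : s * norm2 (v k) <= norm2 (c (x k)).
  have [w hw] := hv k.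
  have h1 : s * norm2 w <= norm2 (v k) by rewrite hw; exact: hs.
  have h2 : dotv (v k) (v k) <= norm2 (c (x k)) * norm2 w.
    rewrite {2}hw dotv_mul trmxK hJv dotvNl.
    apply: le_trans (_ : _ <= `|dotv (c (x k)) w|) _; first by rewrite -normrN ler_norm.
    exact: CS.
  have nv0 := norm2_ge0 (v k); have nc0 := norm2_ge0 (c (x k)).
  have nw0 := norm2_ge0 w.
  rewrite -norm2_sq in h2.
  have h3 : s * norm2 (v k) ^+ 2 <= norm2 (c (x k)) * norm2 (v k) by nra.
  have [nvp|nvn] := ltrP 0 (norm2 (v k)); nra.
set Vm := Cc / s.
have hVm k : norm2 (v k) <= Vm.
  rewrite /Vm ler_pdivlMr // mulrC.
  apply: le_trans (hV k) _; apply: le_trans (hC2 k) (hC1 k).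
have Vm0 : 0 <= Vm := le_trans (norm2_ge0 _) (hVm 0%N).
have hHd k : H k *m d k = - gbar k - (J (x k))^T *m y k.
  by rewrite -(hsys1 k) addrK.
have hU k : zeta * norm2 (ubar k) <= G + Kp * Vm.
  have e1 : dotv (ubar k) (H k *m d k) = - dotv (ubar k) (gbar k).
    rewrite hHd dotvBr dotvNr dotv_mul trmxK hJu dotv0l subr0 //.
  have e2 : dotv (ubar k) (H k *m d k) =
      dotv (ubar k) (H k *m ubar k) + dotv (ubar k) (H k *m v k).
    by rewrite hdec mulmxDr dotvDr.
  have h1 := hHz k (ubar k) (hJu k).
  have h2 : - dotv (ubar k) (gbar k) <= norm2 (ubar k) * G.
    apply: le_trans (_ : _ <= `|dotv (ubar k) (gbar k)|) _; first by rewrite -normrN ler_norm.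
    apply: le_trans (CS _ _) _; apply: ler_wpM2l; [exact: norm2_ge0 | exact: hG].
  have h3 : - dotv (ubar k) (H k *m v k) <= norm2 (ubar k) * (Kp * Vm).
    apply: le_trans (_ : _ <= `|dotv (ubar k) (H k *m v k)|) _; first by rewrite -normrN ler_norm.
    apply: le_trans (CS _ _) _; apply: ler_wpM2l; first exact: norm2_ge0.
    apply: le_trans (hHK k _) _; apply: ler_wpM2l => //; exact: hVm.
  have nu0 := norm2_ge0 (ubar k).
  have h4 : zeta * norm2 (ubar k) ^+ 2 <= norm2 (ubar k) * (G + Kp * Vm) by nra.
  have KV0 : 0 <= Kp * Vm by apply: mulr_ge0.
  have [nup|nun] := ltrP 0 (norm2 (ubar k)); nra.
set Um := (G + Kp * Vm) / zeta.
have hUm k : norm2 (ubar k) <= Um by rewrite /Um ler_pdivlMr // mulrC.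
have Um0 : 0 <= Um := le_trans (norm2_ge0 _) (hUm 0%N).
split; first by exists Um.
have hd k : norm2 (d k) <= Um + Vm.
  rewrite hdec; apply: le_trans (norm2D _ _) _; apply: lerD; [exact: hUm | exact: hVm].
have hY k : s * norm2 (y k) <= G + Kp * (Um + Vm).
  apply: le_trans (hs _ (hXk k) (y k)) _.
  have -> : (J (x k))^T *m y k = - gbar k - H k *m d k.
    by rewrite -(hsys1 k) [H k *m d k + _]addrC addrK.
  apply: le_trans (norm2D _ _) _; rewrite !norm2N; apply: lerD; first exact: hG.
  apply: le_trans (hHK k _) _; apply: ler_wpM2l => //; exact: hd.
set Ym := (G + Kp * (Um + Vm)) / s.
have hYm k : norm2 (y k) <= Ym by rewrite /Ym ler_pdivlMr // mulrC.
have Ym0 : 0 <= Ym := le_trans (norm2_ge0 _) (hYm 0%N).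
set Cd := Kp * (2 * Um + Vm) / s + Ym + 1.
have Cd0 : 0 < Cd.
  have : 0 <= Kp * (2 * Um + Vm) / s.
    by apply: divr_ge0; [apply: mulr_ge0 => //; lra | lra].
  rewrite /Cd; lra.
have hb k p q : - dotv p (H k *m q) <= norm2 p * (Kp * norm2 q).
  apply: le_trans (_ : _ <= `|dotv p (H k *m q)|) _; first by rewrite -normrN ler_norm.
  apply: le_trans (CS _ _) _; apply: ler_wpM2l; [exact: norm2_ge0 | exact: hHK].
apply: (tau_eventually
  (den := fun k => dotv (gbar k) (d k) + Num.max (dotv (d k) (H k *m d k)) 0)
  (cn := fun k => norm1 (c (x k))) (Cd := Cd) t0 he hsg Cd0).
- by move=> k; exact: norm1_ge0.
- move=> k /=.
  set a := dotv (d k) (H k *m d k).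
  have e : dotv (gbar k) (d k) = - a + dotv (c (x k)) (y k).
    have -> : gbar k = - (H k *m d k + (J (x k))^T *m y k) by rewrite hsys1 opprK.
    rewrite dotvNl dotvDl opprD (dotvC (H k *m d k)) -/a.
    by rewrite (dotvC _ (d k)) dotv_mul trmxK hsys2 dotvNl opprK.
  have ea : a = dotv (ubar k) (H k *m ubar k) + dotv (ubar k) (H k *m v k)
              + (dotv (v k) (H k *m ubar k) + dotv (v k) (H k *m v k)).
    by rewrite /a hdec !mulmxDr !dotvDl !dotvDr.
  have h1 := hHz k (ubar k) (hJu k).
  have h2 := hb k (ubar k) (v k); have h3 := hb k (v k) (ubar k).
  have h4 := hb k (v k) (v k).
  have nu0 := norm2_ge0 (ubar k); have nv0 := norm2_ge0 (v k).
  have hu := hUm k; have hvv := hVm k.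
  set P := Kp * (2 * Um + Vm).
  have P0 : 0 <= P by apply: mulr_ge0 => //; lra.
  have hA : - a <= P * norm2 (v k).
    rewrite ea /P.
    have : 0 <= zeta * norm2 (ubar k) ^+ 2 by apply: mulr_ge0; [lra | exact: sqr_ge0].
    have : Kp * norm2 (v k) * norm2 (ubar k) <= Kp * norm2 (v k) * Um.
      by apply: ler_wpM2l => //; apply: mulr_ge0.
    have : Kp * norm2 (v k) * norm2 (v k) <= Kp * norm2 (v k) * Vm.
      by apply: ler_wpM2l => //; apply: mulr_ge0.
    nra.
  have hVc : norm2 (v k) <= norm1 (c (x k)) / s.
    rewrite ler_pdivlMr // mulrC; exact: le_trans (hV k) (hC2 k).
  have hPV : P * norm2 (v k) <= P / s * norm1 (c (x k)).
    have -> : P / s * norm1 (c (x k)) = P * (norm1 (c (x k)) / s) by ring.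
    exact: ler_wpM2l.
  have hB : dotv (c (x k)) (y k) <= norm1 (c (x k)) * Ym.
    apply: le_trans (CS' _ _) _.
    apply: le_trans (_ : _ <= norm1 (c (x k)) * norm2 (y k)) _.
      by apply: ler_wpM2r; [exact: norm2_ge0 | exact: hC2].
    by apply: ler_wpM2l; [exact: norm1_ge0 | exact: hYm].
  have nc0 := norm1_ge0 (c (x k)).
  rewrite e /Cd -/P.
  have [ha|ha] := leP a 0.
    nra.
  nra.
- by move=> k; rewrite htau.
Qed.
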